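(* Let $G$ be a finite subgroup of $\mathrm{U}(q)$, let $n\ge 1$, and let $\mathcal{H}=(\mathbb{C}^q)^{\otimes n}$, on which $\mathrm{U}(q)$ (and hence $G$) acts by $U\mapsto U^{\otimes n}$. Let $\mathcal{C}\subseteq\mathcal{H}$ be a subspace that transforms in an irreducible representation $\boldsymbol{\lambda}$ of $G$ (with character $\lambda$), and let $E$ be an operator on $\mathcal{H}$ that transforms in an irreducible representation $\boldsymbol{R}$ of $\mathrm{U}(q)$. If $\langle 1, \lambda^* R^{\downarrow}\lambda\rangle = 0$, then the Knill–Laflamme condition holds for $E$ on $\mathcal{C}$: there exists $c_E\in\mathbb{C}$ such that $\langle\psi|E|\phi\rangle = c_E\langle\psi|\phi\rangle$ for all $|\psi\rangle,|\phi\rangle\in\mathcal{C}$.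
   Context: A subspace $\mathcal{C}\subseteq\mathcal{H}$ transforms in the representation $\boldsymbol{\lambda}$ of $G$ if it is invariant under all $g^{\otimes n}$, $g\in G$, and the resulting representation of $G$ on $\mathcal{C}$ is isomorphic to $\boldsymbol{\lambda}$. An operator $E$ on $\mathcal{H}$ transforms in the representation $\boldsymbol{R}$ of $\mathrm{U}(q)$ if $E$ lies in a subspace $W$ of operators on $\mathcal{H}$ that is invariant under conjugation $X\mapsto U^{\otimes n}X(U^{\otimes n})^{\dagger}$ for all $U\in\mathrm{U}(q)$ and such that this conjugation representation of $\mathrm{U}(q)$ on $W$ is isomorphic to $\boldsymbol{R}$. $R^{\downarrow}$ is the character of the restriction of $\boldsymbol{R}$ to $G$, $1$ is the trivial character, $\lambda^*$ is the complex conjugate of $\lambda$, products of characters are pointwise, and $\langle\chi,\psi\rangle:=\frac{1}{|G|}\sum_{g\in G}\overline{\chi(g)}\psi(g)$. *)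

(* Defs.v *)
From HB Require Import structures.
From mathcomp Require Import all_boot all_order all_algebra.
From mathcomp Require Import reals.
From mathcomp.real_closed Require Import complex mxtens.

Unset Implicit Arguments.
Unset Strict Implicit.
Unset Printing Implicit Defensive.
Import Order.TTheory GRing.Theory Num.Theory.
Local Open Scope ring_scope.

Section Defs.
Context {R : realType}.
Local Notation C := R[i].

Definition adjmx {m n} (A : 'M[C]_(m, n)) : 'M[C]_(n, m) := (map_mx (@conjc R) A)^T.

Definition unitary {q} (U : 'M[C]_q) : Prop := U *m adjmx U = 1%:M.

Definition tpow {q} (n : nat) (U : 'M[C]_q) : 'M[C]_(q ^ n) := ntensmx U n.

(* Vectors of H are represented as row vectors 'rV_(q^n); an operator A acts on a
   vector v by v |-> v *m A^T (i.e. the column vector A v).  Subspaces of H are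
   row spaces of matrices (mxalgebra). *)
Definition act {N} (A : 'M[C]_N) (v : 'rV[C]_N) : 'rV[C]_N := v *m A^T.

Definition braket {N} (u v : 'rV[C]_N) : C := \sum_(i < N) conjc (u 0 i) * v 0 i.

(* trace of the linear map v |-> v *m A restricted to the row space of V
   (meaningful when the row space of V is invariant under this map). *)
Definition restr_trace {k N} (V : 'M[C]_(k, N)) (A : 'M[C]_N) : C :=
  \tr (row_base V *m A *m pinvmx (row_base V)).

Definition finite_unitary_subgroup {q} (G : seq 'M[C]_q) : Prop :=
  [/\ uniq G, forall g, g \in G -> unitary g, 1%:M \in G &
      forall g h, g \in G -> h \in G -> g *m h \in G].

Definition G_invariant {q} n (G : seq 'M[C]_q) {k} (D : 'M[C]_(k, q ^ n)) : Prop :=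
  forall g, g \in G -> (D *m (tpow n g)^T <= D)%MS.

Definition G_irreducible {q} n (G : seq 'M[C]_q) {k} (Cs : 'M[C]_(k, q ^ n)) : Prop :=
  [/\ Cs != 0, G_invariant n G Cs &
      forall D : 'M[C]_(q ^ n), (D <= Cs)%MS -> G_invariant n G D ->
        D = 0 \/ (D == Cs)%MS].

Definition sub_char {q} n {k} (Cs : 'M[C]_(k, q ^ n)) (g : 'M[C]_q) : C :=
  restr_trace Cs (tpow n g)^T.

(* Operators on H are encoded via mxvec; a space of operators is the row space of a
   matrix W with q^n * q^n columns (operator X belongs to W iff (mxvec X <= W)%MS). *)
Definition conjby {N} (T : 'M[C]_N) (X : 'M[C]_N) : 'M[C]_N := T *m X *m adjmx T.

Definition U_invariant q n {k} (W : 'M[C]_(k, q ^ n * q ^ n)) : Prop :=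
  forall (U : 'M[C]_q), unitary U ->
    forall X : 'M[C]_(q ^ n), (mxvec X <= W)%MS -> (mxvec (conjby (tpow n U) X) <= W)%MS.

Definition U_irreducible q n {k} (W : 'M[C]_(k, q ^ n * q ^ n)) : Prop :=
  [/\ W != 0, U_invariant q n W &
      forall D : 'M[C]_(q ^ n * q ^ n), (D <= W)%MS -> U_invariant q n D ->
        D = 0 \/ (D == W)%MS].

Definition res_char {q} n {k} (W : 'M[C]_(k, q ^ n * q ^ n)) (g : 'M[C]_q) : C :=
  restr_trace W (lin_mx (conjby (tpow n g))).

Definition cfdotG {q} (G : seq 'M[C]_q) (chi psi : 'M[C]_q -> C) : C :=
  (size G)%:R^-1 * \sum_(g <- G) conjc (chi g) * psi g.

End Defs.

(* Main.v *)
Require Import Defs.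
From HB Require Import structures.
From mathcomp Require Import all_boot all_order all_algebra.
From mathcomp Require Import reals.
From mathcomp.real_closed Require Import complex mxtens.
Import GRing.Theory Num.Theory.
Local Open Scope ring_scope.

(* Proof: the compression X |-> conj(B) X B^T (B a basis of C)
   is a G-intertwiner from W to End(C); the averaging projector on the space of
   such maps has trace <1, lambda^* R lambda> * |G| = 0, hence vanishes. *)

Lemma tens1 (R : realType) m p :
  (1%:M : 'M[R[i]]_m) *t (1%:M : 'M[R[i]]_p) = 1%:M.
Proof.
apply/matrixP=> i j.
case: (mxtens_indexP i)=> i0 i1; case: (mxtens_indexP j)=> j0 j1.
rewrite tensmxE !mxE (can_eq (@mxtens_indexK _ _)) xpair_eqE.
by case: (i0 == j0); case: (i1 == j1); rewrite ?mulr1 ?mulr0 ?mul0r.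
Qed.

Lemma tpowM (R : realType) q n (g h : 'M[R[i]]_q) :
  tpow n (g *m h) = tpow n g *m tpow n h.
Proof.
rewrite /tpow; case: n => [|n]; first by rewrite mul1mx.
elim: n => [|n IH] //.
by rewrite !ntensmxSS IH tensmx_mul.
Qed.

Lemma tpow1 (R : realType) q n : tpow n (1%:M : 'M[R[i]]_q) = 1%:M.
Proof.
rewrite /tpow; case: n => [|n] //.
elim: n => [|n IH] //.
by rewrite !ntensmxSS IH tens1.
Qed.

Lemma adj_tens (R : realType) m n p r (A : 'M[R[i]]_(m,n)) (B : 'M[R[i]]_(p,r)) :
  adjmx (A *t B) = adjmx A *t adjmx B.
Proof. by rewrite /adjmx map_mxT trmx_tens. Qed.

Lemma tpow_adj (R : realType) q n (g : 'M[R[i]]_q) :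
  adjmx (tpow n g) = tpow n (adjmx g).
Proof.
rewrite /tpow; case: n => [|n].
  by apply/matrixP=> i j; rewrite !mxE conjc_nat eq_sym.
elim: n => [|n IH] //.
by rewrite !ntensmxSS adj_tens IH.
Qed.

Lemma tpow_unitary (R : realType) q n (g : 'M[R[i]]_q) :
  unitary g -> unitary (tpow n g).
Proof. by rewrite /unitary tpow_adj -tpowM => ->; rewrite tpow1. Qed.

Definition mmx {R : realType} {a b c d} (M : 'M[R[i]]_(c,a)) (N : 'M[R[i]]_(b,d))
  (X : 'M[R[i]]_(a,b)) : 'M[R[i]]_(c,d) := M *m X *m N.

Fact mmx_semilinear (R : realType) a b c d (M : 'M[R[i]]_(c,a)) (N : 'M[R[i]]_(b,d)) :
  semilinear (mmx M N).
Proof.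
split=> [k X|X Y]; rewrite /mmx; [by rewrite -scalemxAr -scalemxAl | by rewrite mulmxDr mulmxDl].
Qed.

HB.instance Definition _ (R : realType) a b c d (M : 'M[R[i]]_(c,a)) (N : 'M[R[i]]_(b,d)) :=
  GRing.isSemilinear.Build R[i] 'M_(a,b) 'M_(c,d) _ (@mmx R a b c d M N)
    (@mmx_semilinear R a b c d M N).

Lemma mul_vec_mmx (R : realType) a b c d (M : 'M[R[i]]_(c,a)) (N : 'M[R[i]]_(b,d)) X :
  mxvec X *m lin_mx (mmx M N) = mxvec (M *m X *m N).
Proof. exact: (mul_vec_lin (mmx M N)). Qed.

Lemma tr_lin_mmx (R : realType) a b (M : 'M[R[i]]_a) (N : 'M[R[i]]_b) :
  \tr (lin_mx (mmx M N)) = \tr M * \tr N.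
Proof.
rewrite /mxtrace (reindex (uncurry (@mxvec_index a b))); last first.
  by case: (curry_mxvec_bij a b) => h h1 h2; exists h => x _; [apply: h1|apply: h2].
rewrite mulr_suml; under [RHS]eq_bigr do rewrite mulr_sumr.
rewrite pair_bigA; apply: eq_bigr => -[i j] _ /=.
have -> : lin_mx (mmx M N) (mxvec_index i j) (mxvec_index i j) =
   (delta_mx (0:'I_1) (mxvec_index i j) *m lin_mx (mmx M N)) 0 (mxvec_index i j).
  by rewrite -rowE !mxE.
rewrite -mxvec_delta mul_vec_mmx mxvecE.
have E x k : (M *m delta_mx i j) x k = M x i * (k == j)%:R.
  rewrite mxE (bigD1 i) //= big1 => [|l li]; last by rewrite !mxE (negbTE li) mulr0.
  by rewrite !mxE eqxx addr0.
rewrite mxE (bigD1 j) //= E eqxx mulr1 big1 ?addr0 // => k kj.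
by rewrite E (negbTE kj) mulr0 mul0r.
Qed.

Lemma idem_tr0 (R : realType) m (P : 'M[R[i]]_m) :
  P *m P = P -> \tr P = 0 -> P = 0.
Proof.
move=> PP trP.
move: (row_base_free P) (col_base_full P) (mulmx_base P).
move: (col_base P) (row_base P) => X Y fY fX XY.
have XYX : X *m Y *m X = X.
  apply: (row_free_inj fY) => /=.
  transitivity ((X *m Y) *m (X *m Y)); first by rewrite !mulmxA.
  by rewrite XY PP.
have [Xr XrX] := row_fullP fX.
have YX : Y *m X = 1%:M.
  transitivity (Xr *m (X *m Y *m X)); first by rewrite !mulmxA XrX mul1mx.
  by rewrite XYX.
have : (\rank P)%:R = 0 :> R[i].
  rewrite -trP.
  have -> : \tr P = \tr (X *m Y) by rewrite XY.
  by rewrite mxtrace_mulC YX mxtrace1.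
by move/eqP; rewrite pnatr_eq0 mxrank_eq0 => /eqP.
Qed.

Lemma braketE (R : realType) N (u v : 'rV[R[i]]_N) :
  braket u v = (map_mx (@conjc R) u *m v^T) 0 0.
Proof. by rewrite /braket mxE; apply: eq_bigr => i _; rewrite !mxE. Qed.

Lemma reindex_mulG (R : realType) q m (G : seq 'M[R[i]]_q)
  (F : 'M[R[i]]_q -> 'M[R[i]]_m) h :
  finite_unitary_subgroup G -> h \in G ->
  \sum_(g <- G) F (h *m g) = \sum_(g <- G) F g.
Proof.
case=> uG unG _ mG hG.
have injh : injective (fun x : 'M[R[i]]_q => h *m x).
  have [hu _] := mulmx1_unit (unG h hG).
  move=> x y hxy; have := congr1 (mulmx (invmx h)) hxy.
  by rewrite !mulmxA mulVmx // !mul1mx.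
rewrite -(big_map (fun x : 'M[R[i]]_q => h *m x) xpredT F); apply: perm_big.
have um : uniq (map (fun x : 'M[R[i]]_q => h *m x) G) by rewrite map_inj_uniq.
have sub : {subset map (fun x : 'M[R[i]]_q => h *m x) G <= G}.
  by move=> x /mapP [y yG ->]; exact: mG.
have [_ eqs] := uniq_min_size um sub (eq_leq (esym (size_map _ _))).
by apply: uniq_perm.
Qed.

Lemma sum_const_seq (V : zmodType) (T : Type) (s : seq T) (x : V) :
  \sum_(g <- s) x = x *+ size s.
Proof. by elim: s => [|a s IH]; rewrite ?big_nil ?big_cons ?IH ?mulrS. Qed.

Lemma lin_eq (R : realType) a b k (P Q : 'M[R[i]]_(a * b, k)) :
  (forall X, mxvec X *m P = mxvec X *m Q) -> P = Q.
Proof.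
move=> H; apply/row_matrixP=> j; rewrite !rowE.
by rewrite -(vec_mxK (delta_mx 0 j)) H.
Qed.

Lemma conjK_mx (R : realType) m p (M : 'M[R[i]]_(m,p)) :
  map_mx (@conjc R) (map_mx (@conjc R) M) = M.
Proof. by apply/matrixP=> i j; rewrite !mxE conjcK. Qed.

Lemma adjmx_mul (R : realType) m p r (A : 'M[R[i]]_(m,p)) (B : 'M[R[i]]_(p,r)) :
  adjmx (A *m B) = adjmx B *m adjmx A.
Proof. by rewrite /adjmx map_mxM trmx_mul. Qed.

Lemma scl (R : realType) (m : nat) k j (v : 'M[R[i]]_(k,j)) : (m%:R : R[i]) != 0 ->
  (m%:R^-1 : R[i]) *: (v *+ m) = v.
Proof. move=> h. by rewrite -scalerMnr scalerMnl -mulr_natr mulVf // scale1r. Qed.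

Lemma scl2 (R : realType) (m : nat) k j (v : 'M[R[i]]_(k,j)) : (m%:R : R[i]) != 0 ->
  (m%:R^-1 : R[i]) *: ((m%:R^-1 : R[i]) *: ((m%:R : R[i]) *: v)) = m%:R^-1 *: v.
Proof. move=> h. by rewrite scaler_nat scl. Qed.

Local Notation cj := (map_mx (@conjc _)).

Theorem lemma5 (R : realType) (q n : nat) (G : seq 'M[R[i]]_q)
  (kC : nat) (Cs : 'M[R[i]]_(kC, q ^ n))
  (kW : nat) (W : 'M[R[i]]_(kW, q ^ n * q ^ n)) (E : 'M[R[i]]_(q ^ n)) :
  finite_unitary_subgroup G ->
  (1 <= n)%N ->
  G_irreducible n G Cs ->
  U_irreducible q n W ->
  (mxvec E <= W)%MS ->
  cfdotG G (fun _ => 1)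
    (fun g => conjc (sub_char n Cs g) * res_char n W g * sub_char n Cs g) = 0 ->
  exists cE : R[i], forall psi phi : 'rV[R[i]]_(q ^ n),
    (psi <= Cs)%MS -> (phi <= Cs)%MS ->
    braket psi (act E phi) = cE * braket psi phi.
Proof.
move=> FG _ [_ Cinv _] [_ WU _] EW hyp.
have FG' := FG; case: FG' => uG unG oneG mG.
pose B := row_base Cs.
pose Wb := row_base W.
pose T (g : 'M[R[i]]_q) := tpow n g.
pose A (g : 'M[R[i]]_q) := B *m (T g)^T *m pinvmx B.
pose L (g : 'M[R[i]]_q) := lin_mx (mmx (T g) (adjmx (T g))).
pose rho (g : 'M[R[i]]_q) := Wb *m L g *m pinvmx Wb.
pose S (g : 'M[R[i]]_q) := lin_mx (mmx (cj (A g)) (A g)^T).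
pose Fm := lin_mx (mmx (cj B) B^T).
pose M (g : 'M[R[i]]_q) := lin_mx (mmx (rho g) (S g)).
have rcE g : res_char n W g = \tr (rho g) by [].
have scE g : sub_char n Cs g = \tr (A g) by [].
have Tu g : g \in G -> unitary (T g) by move=> gG; apply: tpow_unitary; apply: unG.
have tM g h : T (h *m g) = T h *m T g := tpowM _ _ _ _ _.
have BA g : g \in G -> B *m (T g)^T = A g *m B.
  move=> gG; rewrite /A mulmxKpV // /B eq_row_base.
  by apply: submx_trans (Cinv g gG); rewrite submxMr // eq_row_base.
have WbL g : g \in G -> Wb *m L g = rho g *m Wb.
  move=> gG; rewrite /rho mulmxKpV // /Wb eq_row_base.
  apply/row_subP => i; rewrite row_mul -[row i _]vec_mxK mul_vec_mmx.
  apply: WU; first exact: unG.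
  rewrite vec_mxK; apply: submx_trans (row_sub i _) _.
  by rewrite eq_row_base submx_refl.
have fB : row_free B by apply: row_base_free.
have fWb : row_free Wb by apply: row_base_free.
have BCs : (B :=: Cs)%MS by apply: eq_row_base.
have WbW : (Wb :=: W)%MS by apply: eq_row_base.
have Ldef g X : mxvec X *m L g = mxvec (T g *m X *m adjmx (T g)) by apply: mul_vec_mmx.
have Sdef g X : mxvec X *m S g = mxvec (cj (A g) *m X *m (A g)^T) by apply: mul_vec_mmx.
have Fdef X : mxvec X *m Fm = mxvec (cj B *m X *m B^T) by apply: mul_vec_mmx.
have Mdef g X : mxvec X *m M g = mxvec (rho g *m X *m S g) by apply: mul_vec_mmx.
have trM g : \tr (M g) = \tr (rho g) * \tr (S g) by apply: tr_lin_mmx.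
have trS g : \tr (S g) = \tr (cj (A g)) * \tr (A g)^T by apply: tr_lin_mmx.
clearbody M Fm S rho L A T Wb B.
have ABc g : g \in G -> A g *m B *m cj (T g) = B.
  move=> gG; rewrite -BA // -mulmxA.
  have -> : (T g)^T *m cj (T g) = 1%:M.
    have h := mulmx1C (Tu g gG).
    by rewrite -[cj (T g)]trmxK -trmx_mul h trmx1.
  by rewrite mulmx1.
have LFS g : g \in G -> L g *m Fm *m S g = Fm.
  move=> gG; apply: lin_eq => X.
  rewrite !mulmxA !Ldef !Fdef !Sdef; congr mxvec.
  have e1 : cj (A g) *m (cj B *m (T g)) = cj B.
    by rewrite -[X in _ *m (_ *m X)]conjK_mx -!map_mxM mulmxA ABc.
  have e2 : adjmx (T g) *m B^T *m (A g)^T = B^T.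
    by rewrite /adjmx -!trmx_mul mulmxA ABc.
  have e1' : cj (A g) *m cj B *m T g = cj B by rewrite -mulmxA e1.
  have e2' : adjmx (T g) *m (B^T *m (A g)^T) = B^T by rewrite mulmxA e2.
  by rewrite !mulmxA e1' -!mulmxA e2'.
have Lmul g h : L g *m L h = L (h *m g).
  apply: lin_eq => X; rewrite !mulmxA !Ldef; congr mxvec.
  by rewrite tM adjmx_mul !mulmxA.
have rhoM g h : g \in G -> h \in G -> rho g *m rho h = rho (h *m g).
  move=> gG hG; apply: (row_free_inj fWb) => /=.
  have hgG : h *m g \in G by apply: mG.
  by rewrite -mulmxA -(WbL h hG) mulmxA -(WbL g gG) -mulmxA (Lmul g h) (WbL _ hgG).
have AM g h : g \in G -> h \in G -> A (h *m g) = A g *m A h.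
  move=> gG hG; apply: (row_free_inj fB) => /=.
  have hgG : h *m g \in G by apply: mG.
  rewrite -(BA _ hgG) tM trmx_mul mulmxA (BA _ gG) -mulmxA (BA _ hG).
  by rewrite mulmxA.
have SM g h : g \in G -> h \in G -> S h *m S g = S (h *m g).
  move=> gG hG; apply: lin_eq => X; rewrite !mulmxA !Sdef; congr mxvec.
  by rewrite (AM _ _ gG hG) map_mxM trmx_mul !mulmxA.
have MM g h : g \in G -> h \in G -> M h *m M g = M (h *m g).
  move=> gG hG; apply: lin_eq => X; rewrite !mulmxA !Mdef; congr mxvec.
  by rewrite -(rhoM _ _ gG hG) -(SM _ _ gG hG) !mulmxA.
pose Avm := \sum_(g <- G) M g.
have sG : (size G != 0)%N.
  by apply/eqP => /size0nil G0; rewrite G0 in oneG.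
have sG' : (size G)%:R != 0 :> R[i] by rewrite pnatr_eq0.
have AA : Avm *m Avm = (size G)%:R *: Avm.
  rewrite scaler_nat -sum_const_seq /Avm mulmx_suml.
  apply: eq_big_seq => h hG; rewrite mulmx_sumr.
  transitivity (\sum_(g <- G) M (h *m g)).
    by apply: eq_big_seq => g gG; apply: MM.
  exact: reindex_mulG.
have trA : \tr Avm = 0.
  have hsum : \sum_(g <- G) conjc 1 * ((sub_char n Cs g)^*%C * res_char n W g * sub_char n Cs g) = 0.
    move: hyp; rewrite /cfdotG => /eqP; rewrite mulf_eq0 invr_eq0 (negbTE sG') /=.
    by move/eqP.
  have -> : \tr Avm = \sum_(g <- G) \tr (M g) by rewrite /Avm raddf_sum.
  rewrite -[RHS]hsum; apply: eq_big_seq => g gG.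
  rewrite trM trS rcE scE trace_map_mx mxtrace_tr conjc1 mul1r.
  by rewrite mulrA [_ * \tr (rho g)]mulrC.
pose P := (size G)%:R^-1 *: Avm.
have P0 : P = 0.
  apply: idem_tr0; last by rewrite /P mxtraceZ trA mulr0.
  by rewrite /P -scalemxAl -scalemxAr AA scl2.
pose PhiF := Wb *m Fm.
have PhiFix g : g \in G -> mxvec PhiF *m M g = mxvec PhiF.
  move=> gG; rewrite Mdef; congr mxvec.
  rewrite /PhiF mulmxA -(WbL _ gG) -!mulmxA [L g *m _]mulmxA.
  by rewrite (LFS _ gG).
have Phi0 : PhiF = 0.
  apply/eqP; rewrite -mxvec_eq0; apply/eqP.
  have -> : mxvec PhiF = mxvec PhiF *m P.
    rewrite /P -scalemxAr /Avm mulmx_sumr.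
    rewrite (eq_big_seq (fun=> mxvec PhiF)); last by move=> g gG; apply: PhiFix.
    by rewrite sum_const_seq scl.
  by rewrite P0 mulmx0.
have CE0 : cj B *m E *m B^T = 0.
  have EWb : (mxvec E <= Wb)%MS by rewrite WbW.
  have [c cE] := submxP EWb.
  apply/eqP; rewrite -mxvec_eq0 -Fdef cE -mulmxA -/PhiF Phi0 mulmx0 //.
exists 0 => psi phi psiC phiC.
rewrite mul0r braketE.
have psiB : (psi <= B)%MS by rewrite BCs.
have phiB : (phi <= B)%MS by rewrite BCs.
rewrite -(mulmxKpV psiB) -(mulmxKpV phiB) /act.
set a := psi *m pinvmx B; set b := phi *m pinvmx B.
clearbody a b.
rewrite map_mxM !trmx_mul trmxK.
have -> : cj a *m cj B *m (E *m (B^T *m b^T)) = cj a *m (cj B *m E *m B^T) *m b^T.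
  by rewrite !mulmxA.
by rewrite CE0 mulmx0 mul0mx mxE.
Qed.
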